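(* Let $p\in(0,1)$. Then $L^\infty(\mathbb R^n)\cap\mathcal L^{\Phi_p}(\mathbb R^n)=L^\infty(\mathbb R^n)\cap\mathcal L^{\Phi_p}_{\rm loc}(\mathbb R^n)$; equivalently, $L^\infty(\mathbb R^n)\cap(H^{\Phi_p}(\mathbb R^n))^*=L^\infty(\mathbb R^n)\cap(h^{\Phi_p}(\mathbb R^n))^*$.
   Context: $\Phi_p(\tau):=\tau/(1+\tau^{1-p})$; $\|f\|_{L^{\Phi_p}}:=\inf\{\lambda>0:\int\Phi_p(|f|/\lambda)\le1\}$; $d:=\lfloor n(1/p-1)\rfloor$. For $g\in L^1_{\rm loc}$ and a ball $B$, $P_B^dg$ is the unique polynomial $P$ of degree $\le d$ with $\int_B(g-P)R=0$ for all polynomials $R$ of degree $\le d$. The Orlicz Campanato space $\mathcal L^{\Phi_p}(\mathbb R^n)$ is the set of $g\in L^1_{\rm loc}$ with $\sup_{B}\|\mathbf 1_B\|_{L^{\Phi_p}}^{-1}\int_B|g-P_B^dg|<\infty$ (sup over all balls); it is the dual of the Orlicz Hardy space $H^{\Phi_p}(\mathbb R^n)$. The local Orlicz Campanato space $\mathcal L^{\Phi_p}_{\rm loc}(\mathbb R^n)$ is the set of $g\in L^1_{\rm loc}$ with $\sup_{|B|<1}\|\mathbf 1_B\|_{L^{\Phi_p}}^{-1}\int_B|g-P_B^dg|+\sup_{|B|\ge1}\|\mathbf 1_B\|_{L^{\Phi_p}}^{-1}\int_B|g|<\infty$; it is the dual of the local Orlicz Hardy space $h^{\Phi_p}(\mathbb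 R^n)$. *)

(* Defs.v *)
From HB Require Import structures.
From mathcomp Require Import all_boot all_order all_algebra.
From mathcomp Require Import all_classical all_reals all_analysis.
Set Implicit Arguments. Unset Strict Implicit. Unset Printing Implicit Defensive.
Import Order.TTheory GRing.Theory Num.Theory.
Import numFieldNormedType.Exports.
Local Open Scope classical_set_scope.
Local Open Scope ring_scope.

Section OrliczCampanato.
Variable R : realType.

(* R^n is 'rV[R]_n; coordinate i of y is y ord0 i. *)

Definition vcons (m : nat) (x : R) (v : 'rV[R]_m) : 'rV[R]_m.+1 :=
  \row_(i < m.+1) match unlift ord0 i with None => x | Some j => v ord0 j end.

(* Lebesgue integral over R^n of a nonnegative function, defined as the
   iterated one-dimensional Lebesgue integral (equal to the n-dimensional
   Lebesgue integral for nonnegative Borel functions, by Tonelli). *)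
Fixpoint intRn (n : nat) : ('rV[R]_n -> \bar R) -> \bar R :=
  match n with
  | 0 => fun f => f 0
  | m.+1 => fun f =>
      (\int[lebesgue_measure]_x intRn (fun v : 'rV[R]_m => f (vcons x v)))%E
  end.

Definition sintRn (n : nat) (f : 'rV[R]_n -> R) : \bar R :=
  (intRn (fun y => (Num.max (f y) 0)%:E) - intRn (fun y => (Num.max (- f y) 0)%:E))%E.

Definition lebRn (n : nat) (A : set 'rV[R]_n) : \bar R :=
  intRn (fun y => (\1_A y)%:E).

Definition borel_fun (n : nat) (g : 'rV[R]_n -> R) : Prop :=
  forall U : set R, open U -> <<s [set A : set 'rV[R]_n | open A] >> (g @^-1` U).

Definition ballE (n : nat) (x : 'rV[R]_n) (r : R) : set 'rV[R]_n :=
  [set y | \sum_(i < n) (y ord0 i - x ord0 i) ^+ 2 < r ^+ 2].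

Definition is_ball (n : nat) (B : set 'rV[R]_n) : Prop :=
  exists x r, 0 < r /\ B = ballE x r.

Definition L1loc (n : nat) (g : 'rV[R]_n -> R) : Prop :=
  borel_fun g /\
  forall x r, 0 < r -> (intRn (fun y => (\1_(ballE x r) y * `|g y|)%:E) < +oo)%E.

Definition Linfty (n : nat) (g : 'rV[R]_n -> R) : Prop :=
  borel_fun g /\ exists M : R, lebRn [set y | M < `|g y|] = 0%E.

Definition Phi (p tau : R) : R := tau / (1 + tau `^ (1 - p)).

Definition orlicz_norm (p : R) (n : nat) (f : 'rV[R]_n -> R) : R :=
  inf [set lam : R | 0 < lam /\
                     (intRn (fun y => (Phi p (`|f y| / lam))%:E) <= 1)%E].

Definition polyRn (n d : nat) (P : 'rV[R]_n -> R) : Prop :=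
  exists c : {ffun {ffun 'I_n -> 'I_d.+1} -> R},
    forall y, P y = \sum_(a : {ffun 'I_n -> 'I_d.+1} | (\sum_(i < n) (a i : nat) <= d)%N)
                      c a * \prod_(i < n) (y ord0 i) ^+ (a i).

Definition is_projB (n d : nat) (B : set 'rV[R]_n) (g P : 'rV[R]_n -> R) : Prop :=
  polyRn d P /\
  forall Q, polyRn d Q -> sintRn (fun y => \1_B y * (g y - P y) * Q y) = 0%E.

Definition PBd (n d : nat) (B : set 'rV[R]_n) (g : 'rV[R]_n -> R) : 'rV[R]_n -> R :=
  xget (fun _ => 0) [set P | is_projB d B g P].

Definition dp (n : nat) (p : R) : nat := Num.truncn (n%:R * (p^-1 - 1)).

Definition Campanato (p : R) (n : nat) (g : 'rV[R]_n -> R) : Prop :=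
  L1loc g /\
  exists C : R, forall B : set 'rV[R]_n, is_ball B ->
    (intRn (fun y => (\1_B y * `|g y - PBd (dp n p) B g y|)%:E)
      <= (C * orlicz_norm p (\1_B))%:E)%E.

Definition Campanato_loc (p : R) (n : nat) (g : 'rV[R]_n -> R) : Prop :=
  L1loc g /\
  exists C : R,
    (forall B : set 'rV[R]_n, is_ball B -> (lebRn B < 1)%E ->
      (intRn (fun y => (\1_B y * `|g y - PBd (dp n p) B g y|)%:E)
        <= (C * orlicz_norm p (\1_B))%:E)%E) /\
    (forall B : set 'rV[R]_n, is_ball B -> (1 <= lebRn B)%E ->
      (intRn (fun y => (\1_B y * `|g y|)%:E)
        <= (C * orlicz_norm p (\1_B))%:E)%E).

End OrliczCampanato.

(* Main.v *)
Require Import Defs.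
From HB Require Import structures.
From mathcomp Require Import all_boot all_order all_algebra.
From mathcomp Require Import all_classical all_reals all_analysis.
From mathcomp Require Import measurable_realfun.
From mathcomp Require Import ring lra.
Set Implicit Arguments. Unset Strict Implicit. Unset Printing Implicit Defensive.
Import Order.TTheory GRing.Theory Num.Theory.
Import numFieldNormedType.Exports.
Local Open Scope classical_set_scope.
Local Open Scope ring_scope.
Section PM.
Local Open Scope ereal_scope.
Context d1 d2 (T1 : measurableType d1) (T2 : measurableType d2) (R : realType).
Variable m1 : {sigma_finite_measure set T1 -> \bar R}.
Variable m2 : {sigma_finite_measure set T2 -> \bar R}.
Definition pm := (m1 \x m2).
HB.instance Definition _ := Measure.copy pm (m1 \x m2).
Lemma pm_sigma_finite : sigma_finite setT pm.
Proof.
have /sigma_finiteP[F [TF ndF Foo]] := sigma_finiteT m1.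
have /sigma_finiteP[G [TG ndG Goo]] := sigma_finiteT m2.
exists (fun n => F n `*` G n).
 rewrite -setXTT TF TG predeqE => -[x y]; split.
    move=> [/= [n _ Fnx] [k _ Gky]]; exists (maxn n k) => //; split.
    - by move: x Fnx; exact/subsetPset/ndF/leq_maxl.
    - by move: y Gky; exact/subsetPset/ndG/leq_maxr.
  by move=> [n _ []/= ? ?]; split; exists n.
move=> k; have [? ?] := Foo k; have [? ?] := Goo k.
split; first exact: measurableX.
by rewrite /pm product_measure1E// lte_mul_pinfty// ge0_fin_numE.
Qed.
HB.instance Definition _ := Measure_isSigmaFinite.Build _ _ _ pm pm_sigma_finite.
End PM.

Section S.
Variable R : realType.
Local Open Scope ereal_scope.
Definition dR : measure_display := ltac:(let t := type of (measurableTypeR R : measurableType _) in match t with measurableType ?d => exact d end).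
Fixpoint dispT (k : nat) : measure_display :=
  match k with 0 => dR | k.+1 => (dR, dispT k).-prod%mdisp end.

Fixpoint TT (k : nat) : measurableType (dispT k) :=
  match k return measurableType (dispT k) with
  | 0 => measurableTypeR R
  | k.+1 => (measurableTypeR R * TT k)%type
  end.

Fixpoint lam (k : nat) : {sigma_finite_measure set (TT k) -> \bar R} :=
  match k return {sigma_finite_measure set (TT k) -> \bar R} with
  | 0 => @lebesgue_measure R
  | k.+1 => pm (@lebesgue_measure R) (lam k)
  end.
Fixpoint psi (k : nat) : TT k -> 'rV[R]_k.+1 :=
  match k return TT k -> 'rV[R]_k.+1 with
  | 0 => fun x => vcons x (0 : 'rV[R]_0)
  | k.+1 => fun t => vcons t.1 (@psi k t.2)
  end.

Lemma intRnE k (f : 'rV[R]_k.+1 -> \bar R) :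
  measurable_fun [set: TT k] (fun t => f (@psi k t)) -> (forall y, 0 <= f y) ->
  intRn f = \int[lam k]_t f (@psi k t).
Proof.
elim: k f => [|k IH] f mf f0; first by [].
change (intRn f) with (\int[@lebesgue_measure R]_x intRn (fun v => f (vcons x v))).
transitivity (\int[@lebesgue_measure R]_x \int[lam k]_t f (@psi k.+1 (x, t))).
  apply: eq_integral => x _; rewrite (IH (fun v => f (vcons x v))) //.
  exact: (measurableT_comp mf (@pair1_measurable _ _ _ (TT k) x)).
rewrite -(fubini_tonelli1 (fun z => f (@psi k.+1 z))) //.
Qed.
Local Close Scope ereal_scope.

Lemma vcons0 m (x : R) (v : 'rV[R]_m) : vcons x v ord0 ord0 = x.
Proof. by rewrite /vcons mxE unlift_none. Qed.

Lemma vconsS m (x : R) (v : 'rV[R]_m) j : vcons x v ord0 (lift ord0 j) = v ord0 j.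
Proof. by rewrite /vcons mxE liftK. Qed.

Lemma psi_coord k (i : 'I_k.+1) :
  measurable_fun [set: TT k] (fun t => @psi k t ord0 i).
Proof.
elim: k i => [|k IH] i.
  rewrite (ord1 i) /=. under eq_fun do rewrite vcons0. exact: measurable_id.
case: (unliftP ord0 i) => [j ->|->] /=.
  under eq_fun do rewrite vconsS.
  exact: (measurableT_comp (IH j) measurable_snd).
under eq_fun do rewrite vcons0. exact: measurable_fst.
Qed.

Section sums.
Variables (d : measure_display) (T : measurableType d).
Lemma measurable_sum (I : Type) (s : seq I) (P : pred I) (F : I -> T -> R) :
  (forall i, measurable_fun [set: T] (F i)) ->
  measurable_fun [set: T] (fun t => \sum_(i <- s | P i) F i t).
Proof.
move=> mF; elim: s => [|a s IH].
  under eq_fun do rewrite big_nil. exact: measurable_cst.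
under eq_fun do rewrite big_cons.
case: (P a) => //. exact: measurable_funD.
Qed.
Lemma measurable_prod (I : Type) (s : seq I) (P : pred I) (F : I -> T -> R) :
  (forall i, measurable_fun [set: T] (F i)) ->
  measurable_fun [set: T] (fun t => \prod_(i <- s | P i) F i t).
Proof.
move=> mF; elim: s => [|a s IH].
  under eq_fun do rewrite big_nil. exact: measurable_cst.
under eq_fun do rewrite big_cons.
case: (P a) => //. exact: measurable_funM.
Qed.
End sums.

Lemma poly_measurable k d (P : 'rV[R]_k.+1 -> R) : polyRn d P ->
  measurable_fun [set: TT k] (fun t => P (@psi k t)).
Proof.
move=> [c Pc]; under eq_fun do rewrite Pc.
apply: measurable_sum => a; apply: measurable_funM; first exact: measurable_cst.
apply: measurable_prod => i; apply: measurable_funX; exact: psi_coord.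
Qed.

Lemma ball_measurable k (x : 'rV[R]_k.+1) r :
  measurable (@psi k @^-1` Defs.ballE x r).
Proof.
have mh : measurable_fun [set: TT k]
    (fun t => \sum_(i < k.+1) (@psi k t ord0 i - x ord0 i) ^+ 2).
  apply: measurable_sum => i; apply: measurable_funX.
  apply: measurable_funB; [exact: psi_coord|exact: measurable_cst].
have := mh measurableT `]-oo, r ^+ 2[%classic (measurable_itv _).
by rewrite setTI /Defs.ballE /preimage /= ; under eq_set do rewrite in_itv /=.
Qed.

Lemma measurable_forall_seq (I : eqType) d (T : measurableType d) (s : seq I)
  (Q : I -> set T) : (forall i, measurable (Q i)) ->
  measurable [set t | forall i, i \in s -> Q i t].
Proof.
move=> mQ; elim: s => [|a s IH].
  by rewrite (_ : [set t | _] = setT) //; apply/seteqP; split => t //= _ i.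
rewrite (_ : [set t | _] = Q a `&` [set t | forall i, i \in s -> Q i t]).
  exact: measurableI.
apply/seteqP; split => t /=.
  by move=> H; split; [apply: H; rewrite mem_head|move=> i iS; apply: H; rewrite in_cons iS orbT].
by move=> [Qa H] i; rewrite in_cons => /orP[/eqP ->//|]; exact: H.
Qed.

Lemma measurable_forall_fin (I : finType) d (T : measurableType d)
  (Q : I -> set T) : (forall i, measurable (Q i)) ->
  measurable [set t | forall i, Q i t].
Proof.
move=> mQ; rewrite (_ : [set t | _] = [set t | forall i, i \in enum I -> Q i t]).
  exact: measurable_forall_seq.
by apply/seteqP; split => t /= H i //; apply: H; rewrite mem_enum.
Qed.

Definition box k (q rr : 'rV[rat]_k.+1) : set 'rV[R]_k.+1 :=
  [set y | forall j, `|y ord0 j - ratr (q ord0 j)| < ratr (rr ord0 j)].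

Lemma box_measurable k (q rr : 'rV[rat]_k.+1) : measurable (@psi k @^-1` box q rr).
Proof.
apply: measurable_forall_fin => j.
have mh : measurable_fun [set: TT k] (fun t => `|@psi k t ord0 j - ratr (q ord0 j)|).
  apply: measurableT_comp; first exact: normr_measurable.
  apply: measurable_funB; [exact: psi_coord|exact: measurable_cst].
have := mh measurableT `]-oo, ratr (rr ord0 j)[%classic (measurable_itv _).
by rewrite setTI /preimage /=; under eq_set do rewrite in_itv /=.
Qed.

Lemma open_measurable_psi k (U : set 'rV[R]_k.+1) : open U ->
  measurable (@psi k @^-1` U).
Proof.
move=> oU.
pose F (i : 'rV[rat]_k.+1 * 'rV[rat]_k.+1) : set (TT k) :=
  if pselect (box i.1 i.2 `<=` U) then @psi k @^-1` box i.1 i.2 else set0.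
have -> : @psi k @^-1` U = \bigcup_i F i.
  apply/seteqP; split => t /=; last first.
    by move=> [i _]; rewrite /F; case: pselect => // sU /sU.
  move=> Ut; have [P Pn PU] := oU _ Ut.
  have H : forall j : 'I_k.+1, exists qr : rat * rat,
      `|@psi k t ord0 j - ratr qr.1| < ratr qr.2 /\
      forall z : R, `|z - ratr qr.1| < ratr qr.2 -> P ord0 j z.
    move=> j; have /nbhs_ballP [e e0 eP] := Pn ord0 j.
    have e20 : (0 : R) < e / 2 by rewrite divr_gt0.
    have [r] := rat_in_itvoo e20.
    rewrite in_itv /= => /andP[r0 re].
    have qq : @psi k t ord0 j - ratr r < @psi k t ord0 j + ratr r by lra.
    have [q] := rat_in_itvoo qq.
    rewrite in_itv /= => /andP[q1 q2].
    exists (q, r) => /=; split.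
      by rewrite ltr_norml; apply/andP; split; rewrite ?ltrBrDr ?ltrBlDr ?opprB; lra.
    move=> z; rewrite ltr_norml => /andP[z1 z2]; apply: eP.
    rewrite /ball /= ltr_norml; apply/andP; split; lra.
  have [f Hf] := choice H.
  exists (\row_j (f j).1, \row_j (f j).2) => //.
  rewrite /F; case: pselect => /= [_|nsub].
    by move=> j; rewrite !mxE; case: (Hf j).
  exfalso; apply: nsub => z zb; apply: PU => i j; rewrite (ord1 i).
  have := zb j; rewrite !mxE; case: (Hf j) => _; exact.
apply: countable_bigcupT_measurable; first exact: countableP.
move=> i; rewrite /F; case: pselect => h /=; [exact: box_measurable|exact: measurable0].
Qed.

Lemma borel_measurable_psi k (A : set 'rV[R]_k.+1) :
  <<s [set B : set 'rV[R]_k.+1 | open B] >> A -> measurable (@psi k @^-1` A).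
Proof.
move=> hA.
have sa : sigma_algebra [set: 'rV[R]_k.+1]
    (image_set_system [set: TT k] (@psi k) measurable).
  exact: sigma_algebra_image (sigma_algebra_measurable (TT k)).
have := smallest_sub sa _ hA.
rewrite /image_set_system /= setTI; apply.
by move=> B oB; rewrite /= setTI; exact: open_measurable_psi.
Qed.

Lemma borel_fun_measurable k (g : 'rV[R]_k.+1 -> R) : borel_fun g ->
  measurable_fun [set: TT k] (fun t => g (@psi k t)).
Proof.
move=> bg.
have E : (measurable : set (set R)) = <<s @RGenInftyO.G R >>.
  exact: (RGenInftyO.measurableE R).
have H : preimage_set_system [set: TT k] (fun t => g (@psi k t)) (@RGenInftyO.G R)
    `<=` measurable.
  move=> _ [_ [x ->] <-]; rewrite setTI.
  have : open (`]-oo, x[%classic : set R) by exact: interval_open.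
  move=> /bg /borel_measurable_psi.
  by rewrite -comp_preimage.
exact: (measurability _ E H).
Qed.

Definition tail k (x : 'rV[R]_k.+2) : 'rV[R]_k.+1 := \row_j x ord0 (lift ord0 j).

Definition cubeC k (x : 'rV[R]_k.+1) (r : R) : set 'rV[R]_k.+1 :=
  [set y | forall j, `|y ord0 j - x ord0 j| < r].

Lemma cubeC_measurable k (x : 'rV[R]_k.+1) r : measurable (@psi k @^-1` cubeC x r).
Proof.
apply: measurable_forall_fin => j.
have mh : measurable_fun [set: TT k] (fun t => `|@psi k t ord0 j - x ord0 j|).
  apply: measurableT_comp; first exact: normr_measurable.
  apply: measurable_funB; [exact: psi_coord|exact: measurable_cst].
have := mh measurableT `]-oo, r[%classic (measurable_itv _).
by rewrite setTI /preimage /=; under eq_set do rewrite in_itv /=.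
Qed.

Lemma leb_itv_fin (a b : R) :
  (lebesgue_measure (`]a, b[%classic : set (measurableTypeR R)) < +oo)%E.
Proof.
suff : (lebesgue_measure ([set` `]a, b[] : set R) < +oo)%E by [].
by rewrite lebesgue_measure_itv; case: ifP => _ //; rewrite ltry.
Qed.

Lemma cubeC_fin k (x : 'rV[R]_k.+1) r : (lam k (@psi k @^-1` cubeC x r) < +oo)%E.
Proof.
elim: k x => [|k IH] x.
  rewrite (_ : _ @^-1` _ = `]x ord0 ord0 - r, x ord0 ord0 + r[%classic).
    exact: leb_itv_fin.
  apply/seteqP; split => t /=; rewrite /cubeC /= in_itv /=.
    by move=> /(_ ord0); rewrite vcons0 ltr_norml => /andP[? ?]; apply/andP; split; lra.
  move=> /andP[? ?] j; rewrite (ord1 j) vcons0 ltr_norml; apply/andP; split; lra.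
rewrite (_ : _ @^-1` _ = `]x ord0 ord0 - r, x ord0 ord0 + r[%classic `*`
    (@psi k @^-1` cubeC (tail x) r)).
  rewrite /= /pm product_measure1E //; last exact: cubeC_measurable.
  have h1 := leb_itv_fin (x ord0 ord0 - r) (x ord0 ord0 + r).
  have h2 := IH (tail x).
  apply: lte_mul_pinfty => //.
  apply/fin_numPlt/andP; split => //.
  exact: (lt_le_trans (ltNyr 0) (measure_ge0 _ _)).
apply/seteqP; split => t /=; rewrite /cubeC /= in_itv /=.
  move=> H; split.
    by move: (H ord0); rewrite vcons0 ltr_norml => /andP[? ?]; apply/andP; split; lra.
  by move=> j; move: (H (lift ord0 j)); rewrite vconsS /tail mxE.
move=> [/andP[? ?] H] j; case: (unliftP ord0 j) => [j' ->|->].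
  by rewrite vconsS; move: (H j'); rewrite /tail mxE.
rewrite vcons0 ltr_norml; apply/andP; split; lra.
Qed.

Lemma intRnR k (h : 'rV[R]_k.+1 -> R) :
  measurable_fun [set: TT k] (fun t => h (@psi k t)) -> (forall y, 0 <= h y) ->
  intRn (fun y => (h y)%:E) = (\int[lam k]_t (h (@psi k t))%:E)%E.
Proof.
move=> mh h0; rewrite intRnE //; exact/measurable_EFinP.
Qed.

Lemma indic_measurable k (A : set 'rV[R]_k.+1) : measurable (@psi k @^-1` A) ->
  measurable_fun [set: TT k] (fun t => \1_A (@psi k t) : R).
Proof.
move=> mA; rewrite (_ : (fun t => _) = \1_(@psi k @^-1` A)).
  exact: measurable_indic.
by apply/funext => t; rewrite !indicE.
Qed.

Lemma intRn_cst_indic k (A : set 'rV[R]_k.+1) (c : R) : 0 <= c ->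
  measurable (@psi k @^-1` A) ->
  intRn (fun y => (c * \1_A y)%:E) = (c%:E * lebRn A)%E.
Proof.
move=> c0 mA; rewrite intRnR; first last.
- by move=> y; rewrite mulr_ge0 // indicE.
- apply: measurable_funM; first exact: measurable_cst.
  exact: indic_measurable.
rewrite /lebRn intRnR; first last.
- by move=> y; rewrite indicE.
- exact: indic_measurable.
under eq_integral do rewrite EFinM.
rewrite ge0_integralZl_EFin //; exact/measurable_EFinP/indic_measurable.
Qed.

Lemma lebRnE k (A : set 'rV[R]_k.+1) : measurable (@psi k @^-1` A) ->
  lebRn A = lam k (@psi k @^-1` A).
Proof.
move=> mA; rewrite /lebRn intRnR; first last.
- by move=> y; rewrite indicE.
- exact: indic_measurable.
rewrite (_ : (fun t => _) = (fun t => (\1_(@psi k @^-1` A) t)%:E)).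
  by rewrite integral_indic // setIT.
by apply/funext => t; rewrite !indicE.
Qed.

Lemma ball_sub_cube k (x : 'rV[R]_k.+1) r : 0 < r -> Defs.ballE x r `<=` cubeC x r.
Proof.
move=> r0 y /= H j.
have : (y ord0 j - x ord0 j) ^+ 2 <= \sum_(i < k.+1) (y ord0 i - x ord0 i) ^+ 2.
  rewrite (bigD1 j) //= lerDl; apply: sumr_ge0 => i _; exact: sqr_ge0.
move: H; set s := \sum_(i < k.+1) _; set a := y ord0 j - x ord0 j => H Hj.
have h3 : a ^+ 2 < r ^+ 2 by exact: (le_lt_trans Hj H).
rewrite ltr_norml; apply/andP; split.
  rewrite ltNge; apply/negP => h4.
  have h5 : 0 <= (- r - a) * (r - a) by apply: mulr_ge0; lra.
  nra.
rewrite ltNge; apply/negP => h4.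
have h5 : 0 <= (a - r) * (a + r) by apply: mulr_ge0; lra.
nra.
Qed.

Lemma ball_fin k (x : 'rV[R]_k.+1) r : 0 < r -> exists m : R, lebRn (Defs.ballE x r) = m%:E /\ 0 <= m.
Proof.
move=> r0; rewrite lebRnE; last exact: ball_measurable.
have h1 : (lam k (@psi k @^-1` Defs.ballE x r) <= lam k (@psi k @^-1` cubeC x r))%E.
  apply: le_measure; rewrite ?inE; [exact: ball_measurable|exact: cubeC_measurable|].
  by move=> t; apply: ball_sub_cube.
have h2 := cubeC_fin x r.
have h0 : (0 <= lam k (@psi k @^-1` Defs.ballE x r))%E by exact: measure_ge0.
exists (fine (lam k (@psi k @^-1` Defs.ballE x r))); split; last exact: fine_ge0.
rewrite fineK //; apply/fin_numPlt/andP; split.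
  exact: (lt_le_trans (ltNyr 0)).
exact: (le_lt_trans h1).
Qed.

Lemma Phi0 p : Phi p 0 = 0 :> R.
Proof. by rewrite /Phi mul0r. Qed.

Lemma Phi_ge0 p (t : R) : 0 <= t -> 0 <= Phi p t.
Proof. by move=> t0; rewrite /Phi divr_ge0 // addr_ge0 // powR_ge0. Qed.

Lemma Phi_le p (t : R) : 0 <= t -> Phi p t <= t.
Proof.
move=> t0; have b0 := powR_ge0 t (1 - p).
rewrite /Phi ler_pdivrMr; last by rewrite ltr_wpDr.
nra.
Qed.

Lemma Phi_lb1 p (t : R) : p < 1 -> 0 <= t <= 1 -> t / 2 <= Phi p t.
Proof.
move=> p1 /andP[t0 t1].
have hb : t `^ (1 - p) <= 1.
  have [->|tn0] := eqVneq t 0; first by rewrite powR0 // subr_eq0 gt_eqF.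
  have : t `^ (1 - p) <= t `^ 0.
    apply: ger_powR; first by rewrite lt_neqAle eq_sym tn0 t0 t1.
    by rewrite subr_ge0 ltW.
  by rewrite powRr0.
have b0 := powR_ge0 t (1 - p).
rewrite /Phi ler_pdivlMr; last by rewrite ltr_wpDr.
nra.
Qed.

Lemma Phi_lb2 p (t : R) : 0 < p -> p < 1 -> 1 <= t ->
  1 / 2 <= Phi p t /\ t `^ p / 2 <= Phi p t.
Proof.
move=> p0 p1 t1.
have t0 : 0 <= t by lra.
have hb1 : 1 <= t `^ (1 - p).
  have : t `^ 0 <= t `^ (1 - p) by apply: ler_powR => //; rewrite subr_ge0 ltW.
  by rewrite powRr0.
have hbt : t `^ (1 - p) <= t by apply: ler1_powR => //; lra.
have hab : t = t `^ p * t `^ (1 - p).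
  rewrite -powRD; last by rewrite addrC subrK oner_eq0.
  by rewrite addrC subrK powRr1.
have a0 := powR_ge0 t p.
split; rewrite /Phi ler_pdivlMr; try (by rewrite ltr_wpDr; lra).
  lra.
rewrite [X in _ <= X]hab; nra.
Qed.

Definition kap (p : R) : R := 1 / (2 * 2 `^ p^-1).

Lemma tau0_ge1 (p : R) : 0 < p -> 1 <= 2 `^ p^-1.
Proof.
move=> p0; have : 2 `^ 0 <= 2 `^ p^-1 by apply: ler_powR; rewrite ?ler1n // invr_ge0 ltW.
by rewrite powRr0.
Qed.

Lemma tau0_p (p : R) : 0 < p -> (2 `^ p^-1) `^ p = 2.
Proof. by move=> p0; rewrite -powRrM mulVf ?gt_eqF // powRr1. Qed.

Lemma kap_gt0 p : 0 < p -> 0 < kap p.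
Proof. move=> p0; have := tau0_ge1 p0; rewrite /kap => h; rewrite divr_gt0 //; lra. Qed.

Lemma kap_le p : 0 < p -> kap p <= 1 / 2.
Proof.
move=> p0; have := tau0_ge1 p0; rewrite /kap => h.
rewrite ler_pdivrMr; lra.
Qed.

Lemma orlicz_ge0 p n (f : 'rV[R]_n -> R) : 0 <= orlicz_norm p f.
Proof.
rewrite /orlicz_norm.
set S := [set lam | _].
case: (pselect (S !=set0)) => [[x Sx]|nS]; last first.
  have -> : S = set0 by apply/seteqP; split => z // Sz; apply: nS; exists z.
  by rewrite inf0.
apply: lb_le_inf; first by exists x.
move=> y [] y0 _; exact: ltW.
Qed.

Lemma orlicz_lb k (p : R) (B : set 'rV[R]_k.+1) (m : R) : 0 < p -> p < 1 ->
  measurable (@psi k @^-1` B) -> lebRn B = m%:E -> 1 <= m ->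
  kap p * m <= orlicz_norm p (\1_B).
Proof.
move=> p0 p1 mB lB m1.
have E : forall lam, 0 < lam ->
    intRn (fun y => (Phi p (`|\1_B y| / lam))%:E) = (Phi p lam^-1 * m)%:E.
  move=> lam l0.
  rewrite (_ : (fun y => _) = (fun y => (Phi p lam^-1 * \1_B y)%:E)).
    by rewrite intRn_cst_indic ?Phi_ge0 ?invr_ge0 ?ltW // lB -EFinM.
  apply/funext => y; rewrite indicE; case: (y \in B) => /=.
    by rewrite normr1 mul1r mulr1.
  by rewrite normr0 mul0r Phi0 mulr0.
rewrite /orlicz_norm; apply: lb_le_inf.
  exists m; split; first lra.
  rewrite E; last lra.
  rewrite lee_fin.
  have m0 : 0 < m by lra.
  have mi : 0 <= m^-1 by rewrite invr_ge0 ltW.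
  have h := Phi_le p mi.
  have := ler_wpM2r (ltW m0) h.
  by rewrite mulVf // gt_eqF.
move=> lam [l0]; rewrite E // lee_fin => H.
have tl : lam^-1 * lam = 1 by rewrite mulVf // gt_eqF.
have t0 : 0 < lam^-1 by rewrite invr_gt0.
have kp := kap_le p0.
have kg := kap_gt0 p0.
case: (leP (lam^-1) 1) => ht.
  have h1 : lam^-1 / 2 <= Phi p lam^-1 by apply: Phi_lb1 => //; rewrite ht ltW.
  have h2 : lam^-1 / 2 * m <= 1.
    apply: le_trans H; apply: ler_wpM2r => //; lra.
  have h3 : m <= 2 * lam.
    have := ler_wpM2r (ltW (mulr_gt0 (ltr0n _ 2) l0)) h2.
    rewrite mul1r => h4; apply: le_trans h4; nra.
  nra.
have [h1 h2] := Phi_lb2 p0 p1 (ltW ht).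
have m2 : m <= 2.
  have : 1 / 2 * m <= 1 by apply: le_trans H; apply: ler_wpM2r => //; lra.
  lra.
have h3 : lam^-1 `^ p <= 2.
  have : lam^-1 `^ p / 2 * m <= 1 by apply: le_trans H; apply: ler_wpM2r => //; lra.
  have := powR_ge0 (lam^-1) p; nra.
have h4 : lam^-1 <= 2 `^ p^-1.
  rewrite leNgt; apply/negP => h5.
  have : (2 `^ p^-1) `^ p < lam^-1 `^ p.
    apply: gt0_ltr_powR => //; rewrite nnegrE ?powR_ge0 //; exact: ltW.
  rewrite tau0_p //; lra.
have tg := tau0_ge1 p0.
have h5 : kap p * 2 = (2 `^ p^-1)^-1.
  by rewrite /kap; field; lra.
have h6 : (2 `^ p^-1)^-1 <= lam.
  rewrite -[lam]invrK lef_pV2 ?posrE //; lra.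
nra.
Qed.

Section Int.
Variables (d : measure_display) (T : measurableType d) (mu : {measure set T -> \bar R}).
Implicit Types u v : T -> R.
Definition II (u : T -> R) := (\int[mu]_t (u t)%:E)%E.

Lemma II_ge0 u : (forall t, 0 <= u t) -> (0 <= II u)%E.
Proof. by move=> u0; apply: integral_ge0 => t _; rewrite lee_fin. Qed.

Lemma IID u v : measurable_fun setT u -> measurable_fun setT v ->
  (forall t, 0 <= u t) -> (forall t, 0 <= v t) ->
  II (fun t => u t + v t) = (II u + II v)%E.
Proof.
move=> mu_ mv u0 v0; rewrite /II; under eq_integral do rewrite EFinD.
apply: ge0_integralD => //; try (by move=> t _; rewrite lee_fin); exact/measurable_EFinP.
Qed.

Lemma IIle u v : measurable_fun setT u -> measurable_fun setT v ->
  (forall t, 0 <= u t) -> (forall t, u t <= v t) -> (II u <= II v)%E.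
Proof.
move=> mu_ mv u0 uv; apply: ge0_le_integral => //.
- by move=> t _; rewrite lee_fin.
- exact/measurable_EFinP.
- exact/measurable_EFinP.
- by move=> t _; rewrite lee_fin.
Qed.

Lemma IIZ c u : 0 <= c -> measurable_fun setT u -> (forall t, 0 <= u t) ->
  II (fun t => c * u t) = (c%:E * II u)%E.
Proof.
move=> c0 mu_ u0; rewrite /II; under eq_integral do rewrite EFinM.
apply: ge0_integralZl_EFin => //; first by move=> t _; rewrite lee_fin.
exact/measurable_EFinP.
Qed.

Lemma IIae u v (N : set T) : measurable N -> mu N = 0%E ->
  measurable_fun setT u -> measurable_fun setT v ->
  (forall t, 0 <= u t) -> (forall t, 0 <= v t) ->
  (forall t, ~ N t -> u t <= v t) -> (II u <= II v)%E.
Proof.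
move=> mN N0 mu_ mv u0 v0 uv; apply: ae_ge0_le_integral => //.
- by move=> t _; rewrite lee_fin.
- exact/measurable_EFinP.
- by move=> t _; rewrite lee_fin.
- exact/measurable_EFinP.
exists N; split => // t /= H; apply: contrapT => Nt; apply: H => _.
by rewrite lee_fin; apply: uv.
Qed.
End Int.

Lemma poly_bounded k dd (P : 'rV[R]_k.+1 -> R) (x : 'rV[R]_k.+1) r :
  polyRn dd P -> 0 < r -> exists K, 0 <= K /\
    forall y, Defs.ballE x r y -> `|P y| <= K.
Proof.
move=> [c Pc] r0.
exists (\sum_(a : {ffun 'I_k.+1 -> 'I_dd.+1} | (\sum_(i < k.+1) (a i : nat) <= dd)%N)
   `|c a| * \prod_(i < k.+1) (`|x ord0 i| + r) ^+ (a i)); split.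
  apply: sumr_ge0 => a _; apply: mulr_ge0 => //; apply: prodr_ge0 => i _.
  by apply: exprn_ge0; apply: addr_ge0 => //; exact: ltW.
move=> y /(ball_sub_cube r0) yc; rewrite Pc.
apply: (le_trans (ler_norm_sum _ _ _)); apply: ler_sum => a _.
rewrite normrM; apply: ler_wpM2l => //; rewrite normr_prod; apply: ler_prod => i _.
rewrite normrX; apply/andP; split; first exact: exprn_ge0.
apply: lerXn2r; rewrite ?nnegrE ?normr_ge0 //.
  by apply: addr_ge0 => //; exact: ltW.
have h2 := yc i.
have := ler_normD (y ord0 i - x ord0 i) (x ord0 i); rewrite subrK => h; lra.
Qed.

Lemma fin_of (E : \bar R) (c : R) : (0 <= E)%E -> (E <= c%:E)%E ->
  exists e, E = e%:E /\ 0 <= e.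
Proof.
move=> E0 Ec; exists (fine E); split; last exact: fine_ge0.
rewrite fineK //; apply/fin_numPlt/andP; split.
  exact: (lt_le_trans (ltNyr 0)).
exact: (le_lt_trans Ec (ltry _)).
Qed.

Section Est.
Variables (k : nat) (g : 'rV[R]_k.+1 -> R) (M : R) (B : set 'rV[R]_k.+1) (m : R).
Hypotheses (bg : borel_fun g) (M0 : 0 < M)
  (gN : lebRn [set y | M < `|g y|] = 0%E)
  (mB : measurable (@psi k @^-1` B)) (lB : lebRn B = m%:E).

Let mg := borel_fun_measurable bg.
Let b t : R := \1_B (@psi k t).
Let G t : R := g (@psi k t).
Let mb : measurable_fun [set: TT k] b := indic_measurable mB.
Let b0 t : 0 <= b t. Proof. by rewrite /b indicE. Qed.
Let b1 t : b t <= 1. Proof. by rewrite /b indicE; case: (_ \in _). Qed.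
Let N := @psi k @^-1` [set y | M < `|g y|].
Let mN : measurable N.
Proof.
have := (measurableT_comp (@normr_measurable R setT) mg) measurableT
   `]M, +oo[%classic (measurable_itv _).
by rewrite setTI /N /preimage /=; under eq_set do rewrite in_itv /= andbT.
Qed.
Let N0 : lam k N = 0%E.
Proof. by rewrite -lebRnE //; exact: mN. Qed.
Let GN t : ~ N t -> `|G t| <= M.
Proof. by rewrite /N /G /preimage /= => /negP; rewrite -leNgt. Qed.

Let IIb : II (lam k) b = m%:E.
Proof.
rewrite /II -lB /lebRn intRnR //; exact: indic_measurable.
Qed.

Lemma est_g_TT : (II (lam k) (fun t => (b t * `|G t|)%R) <= (M * m)%:E)%E.
Proof.
apply: (@le_trans _ _ (II (lam k) (fun t => M * b t))).
  apply: (IIae mN N0).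
  - apply: measurable_funM => //; exact: measurableT_comp.
  - apply: measurable_funM => //; exact: measurable_cst.
  - by move=> t; rewrite mulr_ge0.
  - by move=> t; rewrite mulr_ge0 // ltW.
  - move=> t /GN h; rewrite mulrC; apply: ler_wpM2r => //.
by rewrite (IIZ _ (ltW M0) mb b0) IIb -EFinM.
Qed.

Lemma est_g : (intRn (fun y => (\1_B y * `|g y|)%R%:E) <= (M * m)%:E)%E.
Proof.
rewrite intRnR; first exact: est_g_TT.
- apply: measurable_funM; first exact: indic_measurable.
  exact: measurableT_comp.
- by move=> y; rewrite mulr_ge0 // indicE.
Qed.

Lemma est_proj (x : 'rV[R]_k.+1) (r : R) (dd : nat) (P : 'rV[R]_k.+1 -> R) :
  B = Defs.ballE x r -> 0 < r -> is_projB dd B g P ->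
  (intRn (fun y => (\1_B y * `|g y - P y|)%R%:E) <= (3 * M * m)%:E)%E.
Proof.
move=> Bx r0 [polP orth].
have H0 := orth P polP.
have mQ := poly_measurable polP.
pose Q t := P (@psi k t).
pose h t := (b t * (G t - Q t) * Q t)%R.
have mh : measurable_fun [set: TT k] h.
  apply: measurable_funM => //; apply: measurable_funM => //.
  exact: measurable_funB.
pose hp t := Num.max (h t) 0.
pose hm t := Num.max (- h t) 0.
have mhp : measurable_fun [set: TT k] hp by apply: measurable_maxr => //; exact: measurable_cst.
have mhm : measurable_fun [set: TT k] hm.
  by apply: measurable_maxr => //; apply: measurable_funN.
have hp0 t : 0 <= hp t by rewrite le_max lexx orbT.
have hm0 t : 0 <= hm t by rewrite le_max lexx orbT.
have mbQ : measurable_fun [set: TT k] (fun t => b t * `|Q t|).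
  by apply: measurable_funM => //; exact: measurableT_comp.
have mbGQ : measurable_fun [set: TT k] (fun t => b t * `|G t| * `|Q t|).
  apply: measurable_funM; last exact: measurableT_comp.
  by apply: measurable_funM => //; exact: measurableT_comp.
have mbQ2 : measurable_fun [set: TT k] (fun t => b t * Q t ^+ 2).
  by apply: measurable_funM => //; exact: measurable_funX.
have bQ0 t : 0 <= b t * `|Q t| by rewrite mulr_ge0.
have bGQ0 t : 0 <= b t * `|G t| * `|Q t| by rewrite !mulr_ge0.
have bQ20 t : 0 <= b t * Q t ^+ 2 by rewrite mulr_ge0 // sqr_ge0.
have HAC : (II (lam k) hp - II (lam k) hm = 0)%E.
  move: H0; rewrite /sintRn.
  rewrite intRnR; first last.
  - by move=> y; rewrite le_max lexx orbT.
  - apply: measurable_maxr; last exact: measurable_cst.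
    apply: measurable_funM; last exact: mQ.
    apply: measurable_funM; first exact: indic_measurable.
    exact: measurable_funB.
  rewrite intRnR; first last.
  - by move=> y; rewrite le_max lexx orbT.
  - apply: measurable_maxr; last exact: measurable_cst.
    apply: measurable_funN.
    apply: measurable_funM; last exact: mQ.
    apply: measurable_funM; first exact: indic_measurable.
    exact: measurable_funB.
  by [].
have HA : (II (lam k) hp <= II (lam k) (fun t => (b t * `|G t| * `|Q t|)%R))%E.
  apply: IIle => // t; rewrite ge_max bGQ0 andbT /h.
  have e1 : G t * Q t <= `|G t| * `|Q t| by rewrite -normrM ler_norm.
  have := b0 t; have := sqr_ge0 (Q t); nra.
have HX : (II (lam k) (fun t => (b t * Q t ^+ 2)%R) <=
    II (lam k) (fun t => (b t * `|G t| * `|Q t|)%R) + II (lam k) hm)%E.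
  rewrite -IID //; apply: IIle => //.
    by apply: measurable_funD.
  move=> t; rewrite /hm /h.
  have e1 : G t * Q t <= `|G t| * `|Q t| by rewrite -normrM ler_norm.
  have e2 : - (b t * (G t - Q t) * Q t) <= Num.max (- (b t * (G t - Q t) * Q t)) 0.
    by rewrite le_max lexx.
  have := b0 t; nra.
have HY : (II (lam k) (fun t => (b t * `|G t| * `|Q t|)%R) <=
    M%:E * II (lam k) (fun t => (b t * `|Q t|)%R))%E.
  rewrite -(IIZ _ (ltW M0) mbQ bQ0); apply: (IIae mN N0) => //.
  - by apply: measurable_funM => //; exact: measurable_cst.
  - by move=> t; rewrite mulr_ge0 // ltW.
  move=> t /GN e1; have := bQ0 t; have := b0 t; have := normr_ge0 (Q t); nra.
have HZ : ((4 * M)%:E * II (lam k) (fun t => (b t * `|Q t|)%R) <=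
    II (lam k) (fun t => (b t * Q t ^+ 2)%R) + (4 * M ^+ 2)%:E * m%:E)%E.
  have c0 : 0 <= 4 * M by rewrite mulr_ge0 // ltW.
  have c1 : 0 <= 4 * M ^+ 2 by rewrite mulr_ge0 // sqr_ge0.
  rewrite -(IIZ _ c0 mbQ bQ0) -IIb -(IIZ _ c1 mb b0).
  have mcb : measurable_fun [set: TT k] (fun t => 4 * M ^+ 2 * b t).
    by apply: measurable_funM => //; exact: measurable_cst.
  rewrite -(IID (lam k) mbQ2 mcb bQ20); last by move=> t; rewrite mulr_ge0.
  apply: IIle => //.
  - by apply: measurable_funM => //; exact: measurable_cst.
  - exact: measurable_funD.
  - by move=> t; rewrite mulr_ge0.
  move=> t; have := b0 t.
  have e1 : `|Q t| ^+ 2 = Q t ^+ 2 by rewrite real_normK // num_real.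
  have e2 : 0 <= (`|Q t| - 2 * M) ^+ 2 by exact: sqr_ge0.
  nra.
have [K [K0 HK]] := poly_bounded x polP r0.
have HZK : (II (lam k) (fun t => (b t * `|Q t|)%R) <= (K * m)%:E)%E.
  rewrite EFinM -IIb -(IIZ _ K0 mb b0); apply: IIle => //.
    by apply: measurable_funM => //; exact: measurable_cst.
  move=> t; rewrite /b indicE; case: (boolP (@psi k t \in B)) => [/set_mem|_] /=.
    by rewrite Bx => /HK; rewrite mul1r mulr1.
  by rewrite mul0r mulr0.
have [z [Ze z0]] := fin_of (II_ge0 _ bQ0) HZK.
rewrite Ze in HY HZ.
have [y [Ye y0]] := fin_of (II_ge0 _ bGQ0) HY.
rewrite Ye in HA HX HY.
have [a [Ae a0]] := fin_of (II_ge0 _ hp0) HA.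
rewrite Ae in HA HAC.
have Ce : II (lam k) hm = a%:E.
  move: HAC (II_ge0 (lam k) hm0); case: (II (lam k) hm) => [c| |] //=.
  by move=> /eqP; rewrite -EFinB (_ : 0%E = 0%:E) // eqe subr_eq0 => /eqP ->.
rewrite Ce in HX.
have [xx [Xe x0]] := fin_of (II_ge0 _ bQ20) HX.
rewrite Xe -EFinD lee_fin in HX.
rewrite Xe -!EFinM -EFinD lee_fin in HZ.
rewrite -EFinM lee_fin in HY.
rewrite lee_fin in HA.
have h1 : M * z <= M * (2 * M * m).
  have : M * z <= 2 * (M ^+ 2 * m) by lra.
  by move=> hh; apply: (le_trans hh); rewrite expr2; lra.
have zb : z <= 2 * M * m by rewrite -(ler_pM2l M0).
rewrite intRnR; first last.
- by move=> yy; rewrite mulr_ge0 // indicE.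
- apply: measurable_funM; first exact: indic_measurable.
  apply: measurableT_comp => //; exact: measurable_funB.
have mL : measurable_fun [set: TT k] (fun t => (b t * `|G t - Q t|)%R).
  apply: measurable_funM => //; apply: measurableT_comp => //; exact: measurable_funB.
have mbG : measurable_fun [set: TT k] (fun t => (b t * `|G t|)%R).
  by apply: measurable_funM => //; exact: measurableT_comp.
have mR : measurable_fun [set: TT k] (fun t => (b t * `|G t| + b t * `|Q t|)%R).
  exact: measurable_funD.
have L0 t : 0 <= b t * `|G t - Q t| by rewrite mulr_ge0.
apply: (@le_trans _ _ (II (lam k) (fun t => (b t * `|G t| + b t * `|Q t|)%R))).
  apply: (IIle (lam k) mL mR L0) => t.
  rewrite -mulrDr; apply: ler_wpM2l => //.
  exact: ler_normB.
rewrite (IID (lam k) mbG mbQ); last by move=> t; rewrite mulr_ge0.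
apply: (@le_trans _ _ ((M * m)%:E + z%:E)%E).
  by rewrite -Ze; apply: leeD => //; exact: est_g_TT.
  by rewrite -EFinD lee_fin; nra.
by move=> t; rewrite mulr_ge0.
Qed.
End Est.

Lemma level_measurable k (g : 'rV[R]_k.+1 -> R) c : borel_fun g ->
  measurable (@psi k @^-1` [set y | c < `|g y|]).
Proof.
move=> bg; have mg := borel_fun_measurable bg.
have := (measurableT_comp (@normr_measurable R setT) mg) measurableT
   `]c, +oo[%classic (measurable_itv _).
by rewrite setTI /preimage /=; under eq_set do rewrite in_itv /= andbT.
Qed.
End S.

Theorem lemma4p30 (R : realType) (n : nat) (p : R) :
  (0 < n)%N -> 0 < p -> p < 1 ->
  forall g : 'rV[R]_n -> R,
    Linfty g -> (Campanato p g <-> Campanato_loc p g).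
Proof.
case: n => [//|k] _ p0 p1 g [bg [M0 hM0]].
pose M := Num.max M0 1.
have Mpos : 0 < M by rewrite lt_max ltr01 orbT.
have gN : lebRn [set y | M < `|g y|] = 0%E.
  have mA := level_measurable M bg.
  have mA0 := level_measurable M0 bg.
  apply/eqP; rewrite eq_le; apply/andP; split; last first.
    by rewrite lebRnE //; exact: measure_ge0.
  rewrite -hM0 !lebRnE //; apply: le_measure; rewrite ?inE //.
  move=> t /=; apply: le_lt_trans; rewrite le_max lexx //.
have kg := kap_gt0 p0.
have big_g : forall B : set 'rV[R]_k.+1, Defs.is_ball B -> (1 <= lebRn B)%E ->
    (intRn (fun y => (\1_B y * `|g y|)%:E) <= ((M / kap p) * orlicz_norm p \1_B)%:E)%E.
  move=> B [x [r [r0 ->]]] hB.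
  have [m [lB m0]] := ball_fin x r0.
  have m1 : 1 <= m by move: hB; rewrite lB lee_fin.
  have mB := ball_measurable x r.
  apply: le_trans (est_g bg Mpos gN mB lB) _.
  rewrite lee_fin.
  have := orlicz_lb p0 p1 mB lB m1 => h.
  have -> : M * m = (M / kap p) * (kap p * m) by field; rewrite gt_eqF.
  by apply: ler_wpM2l => //; rewrite divr_ge0 // ltW.
split.
- move=> [L1 [C HC]]; split => //.
  exists (Num.max C (M / kap p)); split.
    move=> B bB _; apply: le_trans (HC B bB) _; rewrite lee_fin.
    by apply: ler_wpM2r; [exact: orlicz_ge0|rewrite le_max lexx].
  move=> B bB hB; apply: le_trans (big_g B bB hB) _; rewrite lee_fin.
  by apply: ler_wpM2r; [exact: orlicz_ge0|rewrite le_max lexx orbT].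
- move=> [L1 [C [Hs Hb]]]; split => //.
  exists (Num.max C (3 * M / kap p)) => B bB.
  have [hB|hB] := ltP (lebRn B) 1%E.
    apply: le_trans (Hs B bB hB) _; rewrite lee_fin.
    by apply: ler_wpM2r; [exact: orlicz_ge0|rewrite le_max lexx].
  rewrite /PBd.
  case: (pselect (exists P, is_projB (dp k.+1 p) B g P)) => [ex|nex]; last first.
    rewrite xgetPN; last by move=> P hP; apply: nex; exists P.
    rewrite (_ : (fun y => _) = (fun y => (\1_B y * `|g y|)%:E)); last first.
      by apply/funext => y; rewrite subr0.
    apply: le_trans (Hb B bB hB) _; rewrite lee_fin.
    by apply: ler_wpM2r; [exact: orlicz_ge0|rewrite le_max lexx].
  have HP := xgetPex (fun=> 0) ex.
  move: bB hB HP => [x [r [r0 ->]]] hB HP.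
  have [m [lB m0]] := ball_fin x r0.
  have m1 : 1 <= m by move: hB; rewrite lB lee_fin.
  have mB := ball_measurable x r.
  apply: le_trans (est_proj bg Mpos gN mB lB erefl r0 HP) _.
  rewrite lee_fin.
  have := orlicz_lb p0 p1 mB lB m1 => h.
  have -> : 3 * M * m = (3 * M / kap p) * (kap p * m) by field; rewrite gt_eqF.
  apply: (@le_trans _ _ ((3 * M / kap p) * orlicz_norm p \1_(Defs.ballE x r))).
    by apply: ler_wpM2l => //; rewrite divr_ge0 // mulr_ge0 // ltW.
  by apply: ler_wpM2r; [exact: orlicz_ge0|rewrite le_max lexx orbT].
Qed.
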